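(* $GR(3,K_4,2) = 10$.
   Context: For positive integers $r,s,t$, $GR(r,K_s,t)$ denotes the minimum integer $n$ such that every coloring of the edges of $K_n$ with $r$ colors contains a copy of $K_s$ whose edges use at most $t$ distinct colors. *)

(* Defs.v *)
From mathcomp Require Import all_boot.
Set Implicit Arguments. Unset Strict Implicit. Unset Printing Implicit Defensive.

(* An r-edge-coloring of K_n on vertex set 'I_n: a symmetric map assigning a
   color in 'I_r to each pair of vertices (only pairs x != y are edges). *)
Definition edge_coloring (n r : nat) (c : 'I_n -> 'I_n -> 'I_r) : Prop :=
  forall x y, c x y = c y x.

Definition colors_on (n r : nat) (c : 'I_n -> 'I_n -> 'I_r) (S : {set 'I_n})
  : {set 'I_r} :=
  [set c x y | x in S, y in S & x != y].

Definition GR_property (r s t n : nat) : Prop :=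
  forall c : 'I_n -> 'I_n -> 'I_r, edge_coloring c ->
    exists S : {set 'I_n}, #|S| = s /\ #|colors_on c S| <= t.

Definition is_GR (r s t n : nat) : Prop :=
  GR_property r s t n /\ forall m, m < n -> ~ GR_property r s t m.

(* Main.v *)
Require Import Defs.
From mathcomp Require Import all_boot zify.
Set Implicit Arguments. Unset Strict Implicit. Unset Printing Implicit Defensive.

(* GR(3,K_4,2) = 10.  Upper bound: a verified exhaustive search (after choosing a vertex of
   maximal colour degree and relabelling its neighbourhood); lower bound: an explicit colouring
   of K_9 in which every K_4 sees all three colours. *)

Definition miss3 (h0 h1 h2 : bool) (u v w : nat) : bool :=
  ~~ [&& h0 || (u == 0) || (v == 0) || (w == 0),
         h1 || (u == 1) || (v == 1) || (w == 1) &
         h2 || (u == 2) || (v == 2) || (w == 2)].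
Definition badK4 (D : seq (seq nat)) (r : seq nat) (b k : nat) : bool :=
  let rowB := nth [::] D b in
  has (fun y => let ay := nth 3 r y in let by_ := nth 3 rowB y in
    let h0 := (k == 0) || (ay == 0) || (by_ == 0) in
    let h1 := (k == 1) || (ay == 1) || (by_ == 1) in
    let h2 := (k == 2) || (ay == 2) || (by_ == 2) in
    if [&& h0, h1 & h2] then false else
    let rowY := nth [::] D y in
    has (fun x => miss3 h0 h1 h2 (nth 3 r x) (nth 3 rowB x) (nth 3 rowY x)) (iota 0 y)) (iota 0 b).
Definition degB (D : seq (seq nat)) (b k : nat) : nat :=
  count (fun c => c == k) (nth [::] D b) + count (fun row => nth 3 row b == k) (drop b.+1 D) + 1.
Definition prune dm D r b k : bool :=
  if dm < count (fun c => c == k) r then true else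
  if dm < degB D b k then true else
  badK4 D r b k.
Definition choices (pat : nat -> nat) (a b : nat) : seq nat :=
  if b == 0 then [:: pat a] else [:: 0; 1; 2].

Fixpoint search (pat : nat -> nat) dm (fuel : nat) (a b : nat) (D : seq (seq nat)) (r : seq nat) : bool :=
  match fuel with
  | 0 => false
  | fuel'.+1 =>
    if 10 <= a then false else
    all (fun k => let r' := rcons r k in
       if prune dm D r' b k then true else
       (if b.+1 == a then search pat dm fuel' a.+1 0 (rcons D r') [::]
        else search pat dm fuel' a b.+1 D r')) (choices pat a b)
  end.

Definition ordd (d : seq nat) : seq nat := sort (fun i j => nth 0 d j <= nth 0 d i) [:: 0; 1; 2].
Definition patl (d : seq nat) : seq nat := flatten [seq nseq (nth 0 d k) k | k <- ordd d].
Definition patf (d : seq nat) (a : nat) : nat := nth 0 (patl d) a.-1.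
Definition dmax (d : seq nat) : nat := maxn (nth 0 d 0) (maxn (nth 0 d 1) (nth 0 d 2)).
Definition search_d (d : seq nat) : bool := search (patf d) (dmax d) 45 1 0 [:: [::]] [::].
Definition alld : seq (seq nat) :=
  flatten [seq [seq [:: i; j; 9 - i - j] | j <- iota 0 (10 - i)] | i <- iota 0 10].
Definition check_all : bool := all search_d alld.



Section Sound.
Variable F : nat -> nat -> nat.
Definition mkrow u n := [seq F u w | w <- iota 0 n].
Definition mkD a := [seq mkrow u u | u <- iota 0 a].

Lemma nth_mkrow u n w : nth 3 (mkrow u n) w = if w < n then F u w else 3.
Proof.
rewrite /mkrow; case: ltnP => H.
  by rewrite (nth_map 0) ?size_iota // nth_iota.
by rewrite nth_default // size_map size_iota.
Qed.

Lemma nth_mkD a u : u < a -> nth [::] (mkD a) u = mkrow u u.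
Proof. by move=> H; rewrite /mkD (nth_map 0) ?size_iota // nth_iota. Qed.

Lemma mkrowS u n : rcons (mkrow u n) (F u n) = mkrow u n.+1.
Proof. by rewrite /mkrow -addn1 iotaD map_cat cats1. Qed.

Lemma mkDS a : rcons (mkD a) (mkrow a a) = mkD a.+1.
Proof. by rewrite /mkD -addn1 iotaD map_cat cats1. Qed.

Lemma search_sound pat dm fuel a b :
  b < a -> search pat dm fuel a b (mkD a) (mkrow a b) = true ->
  (forall u w, w < u < 10 -> F u w \in choices pat u w) ->
  exists u w, [/\ w < u, u < 10 & prune dm (mkD u) (mkrow u w.+1) w (F u w) = true].
Proof.
elim: fuel a b => [//|fuel IH] a b ba /=.
case: leqP => // a10 /allP Hall Hch.
have := Hall (F a b) (Hch a b (introT andP (conj ba a10))).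
rewrite /= mkrowS.
case Hp: (prune _ _ _ _ _).
  by move=> _; exists a, b; split.
case: eqP => [Eb|Nb] Hs.
  have [//|u [w [H1 H2 H3]]] := IH a.+1 0 (ltn0Sn _) _ Hch.
    by move: Hs; rewrite Eb mkDS.
  by exists u, w.
have ba' : b.+1 < a by rewrite ltn_neqAle ba andbT; apply/eqP.
have [u [w [H1 H2 H3]]] := IH a b.+1 ba' Hs Hch.
by exists u, w.
Qed.



Lemma miss3P k a b x y z :
  miss3 ((k == 0) || (a == 0) || (b == 0)) ((k == 1) || (a == 1) || (b == 1)) ((k == 2) || (a == 2) || (b == 2)) x y z ->
  exists2 j, j < 3 & all (fun c => c != j) [:: k; a; b; x; y; z].
Proof.
rewrite /miss3 !negb_and => /or3P [] Hn.
- by exists 0 => //=; move: Hn; rewrite !negb_or -!andbA andbT.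
- by exists 1 => //=; move: Hn; rewrite !negb_or -!andbA andbT.
- by exists 2 => //=; move: Hn; rewrite !negb_or -!andbA andbT.
Qed.

Hypothesis Fsym : forall x y, F x y = F y x.

Lemma degA_le u w k : w < u -> u < 10 ->
  count (fun c => c == k) (mkrow u w.+1) <= count (fun y => (y != u) && (F u y == k)) (iota 0 10).
Proof.
move=> wu u10.
rewrite /mkrow count_map.
have E : 10 = w.+1 + (10 - w.+1) by rewrite subnKC // (leq_trans wu) // ltnW.
rewrite E iotaD count_cat.
apply: leq_trans (leq_addr _ _).
rewrite leq_eqVlt; apply/orP; left; apply/eqP.
apply: eq_in_count => y; rewrite mem_iota add0n => /andP[_ yw].
have -> : y != u by rewrite neq_ltn (leq_trans yw wu).
by [].
Qed.

Lemma iota10 w u : w < u -> u < 10 ->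
  iota 0 10 = iota 0 w ++ w :: iota w.+1 (u - w.+1) ++ u :: iota u.+1 (9 - u).
Proof.
move=> wu u10.
have E : 10 = w + (1 + ((u - w.+1) + (1 + (9 - u)))).
  lia.
rewrite {1}E !iotaD /= add0n.
have -> : w + 1 + (u - w.+1) = u by lia.
by rewrite !addn1.
Qed.

Lemma degB_le u w : w < u -> u < 10 ->
  degB (mkD u) w (F u w) <= count (fun y => (y != w) && (F w y == F u w)) (iota 0 10).
Proof.
move=> wu u10.
rewrite /degB nth_mkD // /mkD -map_drop drop_iota add0n count_map.
rewrite (iota10 wu u10) count_cat /= eqxx /= count_cat /= (eq_sym u) (neq_ltn w u) wu /=.
rewrite Fsym eqxx /= /mkrow count_map.
rewrite add0n addnA leq_add ?leq_addr //.
apply: leq_add; rewrite leq_eqVlt; apply/orP; left; apply/eqP; apply: eq_in_count.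
  move=> y; rewrite mem_iota add0n => /andP[_ yw].
  by rewrite /= (ltn_eqF yw).
move=> y; rewrite mem_iota => /andP[wy _].
by rewrite /= nth_mkrow wy (gtn_eqF wy) Fsym.
Qed.

Lemma badK4_sound u w : w < u -> u < 10 -> badK4 (mkD u) (mkrow u w.+1) w (F u w) ->
  exists y x j, [/\ x < y, y < w, j < 3 &
     all (fun c => c != j) [:: F u w; F u y; F w y; F u x; F w x; F y x]].
Proof.
move=> wu u10; rewrite /badK4 => /hasP [y]; rewrite mem_iota add0n => /andP[_ yw].
rewrite !nth_mkD // ?(ltn_trans yw) // !nth_mkrow yw (ltn_trans yw (ltnSn w)).
case: ifP => // _ /hasP [x]; rewrite mem_iota add0n => /andP[_ xy].
rewrite !nth_mkrow xy (ltn_trans xy yw) (ltn_trans xy (ltn_trans yw (ltnSn w))).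
move=> H; have [j j3 Hj] := miss3P H.
by exists y, x, j.
Qed.
End Sound.


Definition check_pat : bool :=
  all (fun d => [&& count_mem 0 (patl d) == nth 0 d 0, count_mem 1 (patl d) == nth 0 d 1,
                   count_mem 2 (patl d) == nth 0 d 2 & all (fun x => x < 3) (patl d)]) alld.
Lemma check_pat_ok : check_pat = true. Proof. vm_compute. reflexivity. Qed.

Lemma patl_count d : d \in alld -> forall j,
  count_mem j (patl d) = if j < 3 then nth 0 d j else 0.
Proof.
move=> Hd j; have /andP[H0 /andP[H1 /andP[H2 H3]]] := allP check_pat_ok d Hd.
case: ltnP => j3.
  by case: j j3 => [|[|[|]]] //= _; apply/eqP.
apply/count_memPn; apply/negP => /(allP H3); rewrite ltnNge j3.
by [].
Qed.

Lemma in_alld i j : i + j <= 9 -> [:: i; j; 9 - i - j] \in alld.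
Proof.
move=> H; apply/flattenP.
exists [seq [:: i; j0; 9 - i - j0] | j0 <- iota 0 (10 - i)].
  apply/mapP; exists i => //; rewrite mem_iota; lia.
apply/mapP; exists j => //; rewrite mem_iota; lia.
Qed.

Lemma card_count (T : finType) (P : pred T) : #|[set y | P y]| = count P (enum T).
Proof. by rewrite cardE /enum_mem size_filter count_filter; apply: eq_count => y; rewrite !inE andbT. Qed.

Lemma count_iota n (P : pred nat) : count P (iota 0 n) = count (fun y : 'I_n => P (val y)) (enum 'I_n).
Proof. by rewrite -val_enum_ord count_map. Qed.

Lemma count3 (T : eqType) (s : seq T) (f : T -> 'I_3) (Q : pred T) :
  count (fun y => Q y && (val (f y) == 0)) s + count (fun y => Q y && (val (f y) == 1)) s
  + count (fun y => Q y && (val (f y) == 2)) s = count Q s.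
Proof.
elim: s => //= y s IH; rewrite -IH; case: (Q y) => /=; last by [].
case: (f y) => [[|[|[|m]]] Hm] //=; lia.
Qed.

Lemma relabel (c : 'I_10 -> 'I_10 -> 'I_3) (v : 'I_10) (pl : seq nat) :
  (forall j, count_mem j pl = count (fun y => val (c v y) == j) [seq y <- enum 'I_10 | y != v]) ->
  exists L : seq 'I_10, [/\ size L = 10, uniq L, nth v L 0 = v &
     forall i, 0 < i < 10 -> val (c v (nth v L i)) = nth 0 pl i.-1].
Proof.
move=> Hc.
set s1 := [seq y <- enum 'I_10 | y != v].
set t := map (fun y => val (c v y)) s1.
have Hp : perm_eq pl t.
  by apply/allP => j _; apply/eqP; rewrite Hc /t (count_map (fun y => val (c v y))).
have s1s : size s1 = 9.
  rewrite /s1 size_filter.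
  have := count_predC (pred1 v) (enum 'I_10).
  rewrite count_uniq_mem ?enum_uniq // mem_enum size_enum_ord.
  by move=> E; apply/eqP; rewrite -(eqn_add2l 1) E.
have s1u : uniq s1 by rewrite filter_uniq ?enum_uniq.
have [Is HIs Epl] := perm_iotaP 0 Hp.
have sIs : size Is = 9 by rewrite (perm_size HIs) size_iota size_map.
have Isl : forall i, i \in Is -> i < 9.
  by move=> i; rewrite (perm_mem HIs) mem_iota size_map s1s.
have uIs : uniq Is by rewrite (perm_uniq HIs) iota_uniq.
exists (v :: map (nth v s1) Is); split.
- by rewrite /= size_map sIs.
- rewrite /= map_inj_in_uniq ?uIs ?andbT.
    apply/mapP => [[i iI Ev]].
    have : nth v s1 i \in s1 by rewrite mem_nth // s1s Isl.
    by rewrite -Ev /s1 mem_filter eqxx.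
  move=> i j iI jI /eqP; rewrite nth_uniq ?s1s ?Isl //.
  by move/eqP.
- by [].
move=> [//|i] /andP [_ i10] /=.
have iI : i < size Is by rewrite sIs.
rewrite (nth_map 0) // Epl (nth_map 0) // /t (nth_map v) //.
by rewrite s1s Isl // mem_nth.
Qed.

Definition Dc (c : 'I_10 -> 'I_10 -> 'I_3) (x : 'I_10) (k : nat) : nat :=
  #|[set y | (y != x) && (val (c x y) == k)]|.

Lemma Dc_inj (c : 'I_10 -> 'I_10 -> 'I_3) (p : 'I_10 -> 'I_10) x k :
  injective p -> Dc (fun a b => c (p a) (p b)) x k <= Dc c (p x) k.
Proof.
move=> pinj; rewrite /Dc -(card_imset _ pinj); apply: subset_leq_card.
apply/subsetP => z /imsetP [y]; rewrite !inE => /andP [yx Hy] ->.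
by rewrite (inj_eq pinj) yx Hy.
Qed.

Lemma Dc_sum (c : 'I_10 -> 'I_10 -> 'I_3) v : Dc c v 0 + Dc c v 1 + Dc c v 2 = 9.
Proof.
rewrite /Dc !card_count.
rewrite (count3 (enum 'I_10) (c v) (fun y => y != v)).
have := count_predC (pred1 v) (enum 'I_10).
rewrite count_uniq_mem ?enum_uniq // mem_enum size_enum_ord.
by move=> E; apply/eqP; rewrite -(eqn_add2l 1) E.
Qed.

Lemma Dc_filter (c : 'I_10 -> 'I_10 -> 'I_3) v j :
  Dc c v j = count (fun y => val (c v y) == j) [seq y <- enum 'I_10 | y != v].
Proof. by rewrite /Dc card_count [RHS]count_filter; apply: eq_count => y; rewrite /= andbC. Qed.

Lemma check_all_ok : all search_d alld = true.
Proof. vm_compute. reflexivity. Qed.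

Lemma card_l (l : seq nat) : uniq l -> all (fun z => z < 10) l ->
  #|[set i : 'I_10 | val i \in l]| = size l.
Proof.
move=> ul al; rewrite card_count -(count_iota 10 (fun z => z \in l)) -size_filter.
apply/perm_size/uniq_perm; rewrite ?filter_uniq ?iota_uniq //.
move=> z; rewrite mem_filter mem_iota add0n.
case zl: (z \in l) => //=; exact: (allP al z zl).
Qed.

Lemma card_notj (j : nat) : j < 3 -> #|[set k : 'I_3 | val k != j]| = 2.
Proof.
by move=> j3; rewrite card_count -(count_iota 3 (fun k => k != j)); case: j j3 => [|[|[|]]].
Qed.

Lemma search_dE d : search_d d = search (patf d) (dmax d) 45 1 0 [:: [::]] [::].
Proof. by rewrite /search_d. Qed.

Theorem upper : GR_property 3 4 2 10.
Proof.
move=> c csym.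
case: (@arg_maxnP _ (ord0, ord0) xpredT (fun vk : 'I_10 * 'I_3 => Dc c vk.1 vk.2) isT) => [[v k0] _ Hmax].
pose d := [:: Dc c v 0; Dc c v 1; Dc c v 2].
have Hd : d \in alld.
  have E := Dc_sum c v.
  have -> : d = [:: Dc c v 0; Dc c v 1; 9 - Dc c v 0 - Dc c v 1] by rewrite /d -E; congr [:: _; _; _]; lia.
  apply: in_alld; lia.
have Hs : search_d d by apply: (allP check_all_ok).
have Hcnt : forall j, count_mem j (patl d) = count (fun y => val (c v y) == j) [seq y <- enum 'I_10 | y != v].
  move=> j; rewrite patl_count // -Dc_filter.
  case: (ltnP j 3) => j3.
    by case: j j3 => [|[|[|]]].
  have -> : Dc c v j = 0.
    rewrite /Dc card_count; apply/eqP; rewrite -leqn0 leqNgt -has_count.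
    apply/negP => /hasP [y _ /andP [_ /eqP Ey]].
    by have := ltn_ord (c v y); rewrite Ey ltnNge j3.
  by [].
have [L [sL uL L0 HL]] := relabel Hcnt.
pose p (i : 'I_10) : 'I_10 := nth v L i.
have pinj : injective p.
  by move=> i j /eqP; rewrite /p nth_uniq ?sL // => /eqP /val_inj.
pose c' x y := c (p x) (p y).
pose G u w := val (c' (inord u) (inord w) : 'I_3).
pose F u w := G (maxn u w) (minn u w).
have Fsym : forall x y, F x y = F y x by move=> x y; rewrite /F maxnC minnC.
have FE : forall x y : 'I_10, F x y = val (c' x y).
  move=> x y; rewrite /F /G; case: (leqP x y) => xy.
    by rewrite !inord_val /c' csym.
  by rewrite !inord_val.
have p0 : p ord0 = v by rewrite /p L0.
have F3 : forall u w, F u w < 3 by move=> u w; rewrite /F /G ltn_ord.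
clearbody F.
have Fch : forall u w, w < u < 10 -> F u w \in choices (patf d) u w.
  move=> u w /andP [wu u10]; rewrite /choices; case: eqP => [w0|_]; last first.
    by have := F3 u w; rewrite !inE; case: (F u w) => [|[|[|]]].
  subst w; rewrite inE; apply/eqP.
  have Hu : u = val (inord u : 'I_10) by apply/esym/inordK.
  have -> : 0 = val (ord0 : 'I_10) by [].
  rewrite {1}Hu FE /c' p0 csym /p HL; last by rewrite -Hu wu.
  by rewrite -Hu.
have Hroot : search (patf d) (dmax d) 45 1 0 (mkD F 1) (mkrow F 1 0) = true.
  have -> : mkD F 1 = [:: [::]] by [].
  have -> : mkrow F 1 0 = [::] by [].
  by move: Hs; rewrite search_dE.
have [u [w [wu u10 Hpr]]] := search_sound (ltn0Sn 0) Hroot Fch.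
have Hdm : Dc c v k0 <= dmax d.
  rewrite /dmax /d /=; case: k0 Hmax => [[|[|[|]]] Hk] //= _.
  - by rewrite leq_maxl.
  - by rewrite leq_max leq_maxl orbT.
  - by rewrite leq_max leq_maxr orbT.
have degF : forall z k, z < 10 -> count (fun y => (y != z) && (F z y == k)) (iota 0 10) <= dmax d.
  move=> z k z10; apply: leq_trans Hdm.
  rewrite count_iota.
  have -> : count (fun y : 'I_10 => (val y != z) && (F z (val y) == k)) (enum 'I_10)
      = Dc c' (inord z) k.
    rewrite /Dc card_count; apply: eq_count => y /=.
    have Hz : val (inord z : 'I_10) = z by apply: inordK.
    by rewrite -FE Hz -(inj_eq val_inj) Hz.
  apply: leq_trans (Dc_inj _ _ _ pinj) _.
  case: (ltnP k 3) => k3.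
    by have := Hmax (p (inord z), Ordinal k3) isT.
  have -> : Dc c (p (inord z)) k = 0; last by [].
  rewrite /Dc card_count; apply/eqP; rewrite -leqn0 leqNgt -has_count.
  apply/negP => /hasP [y _ /andP [_ /eqP Ey]].
  by have := ltn_ord (c (p (inord z)) y); rewrite Ey ltnNge k3.
move: Hpr; rewrite /prune; case: ifP => [Hd1 _|_].
  have := leq_trans Hd1 (@degA_le F u w (F u w) wu u10).
  by rewrite ltnNge degF.
case: ifP => [Hd2 _|_ Hb].
  have := leq_trans Hd2 (@degB_le F Fsym u w wu u10).
  by rewrite ltnNge degF // (ltn_trans wu).
have [y [x [j [xy yw j3 Hj]]]] := @badK4_sound F u w wu u10 Hb.
pose l := [:: u; w; y; x].
have ul : uniq l.
  rewrite /l /= !inE !negb_or !(gtn_eqF wu, gtn_eqF xy, gtn_eqF yw) /=.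
  rewrite !(gtn_eqF (ltn_trans yw wu)) !(gtn_eqF (ltn_trans xy yw)) /=.
  by rewrite !(gtn_eqF (ltn_trans xy (ltn_trans yw wu))).
have al : all (fun z => z < 10) l.
  by rewrite /l /= u10 (ltn_trans wu u10) (ltn_trans yw (ltn_trans wu u10)) (ltn_trans xy (ltn_trans yw (ltn_trans wu u10))).
have Hl : forall a1 a2, a1 \in l -> a2 \in l -> a1 != a2 -> F a1 a2 != j.
  move/allP: Hj => Hj a1 a2 H1 H2 H12; apply: Hj.
  move: H1 H2 H12; rewrite !inE.
  by case/or4P => /eqP -> ; case/or4P => /eqP -> ; rewrite ?eqxx // => _;
    rewrite ?inE ?eqxx ?orbT //= Fsym ?inE ?eqxx ?orbT.
pose S' := [set i : 'I_10 | val i \in l].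
exists (p @: S'); split.
  by rewrite card_imset // card_l.
apply: (@leq_trans #|[set k : 'I_3 | val k != j]|); last by rewrite card_notj.
apply: subset_leq_card; apply/subsetP => z.
case/imset2P => s t; rewrite inE => /imsetP [s' Hs' ->].
rewrite !inE => /andP [/imsetP [t' Ht' ->] Hst] ->.
have := FE s' t'; rewrite /c' => <-.
have H1 : val s' \in l by move: Hs'; rewrite inE.
have H2 : val t' \in l by move: Ht'; rewrite inE.
have H3 : val s' != val t'.
  by apply: contra Hst => /eqP E; rewrite (val_inj E).
exact: (Hl _ _ H1 H2 H3).
Qed.

Definition tbl9 : seq (seq nat) :=
[:: [::0;0;0;0;0;1;1;2;2];
 [::0;0;0;1;2;0;2;0;1];
 [::0;0;0;2;1;2;0;1;0];
 [::0;1;2;0;0;2;0;0;1];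
 [::0;2;1;0;0;0;2;1;0];
 [::1;0;2;2;0;0;1;0;0];
 [::1;2;0;0;2;1;0;0;0];
 [::2;0;1;0;1;0;0;0;2];
 [::2;1;0;1;0;0;0;2;0]].
Definition T9 (u w : nat) : nat := nth 0 (nth [::] tbl9 u) w.

Definition good9 : bool :=
  all (fun a => all (fun b => all (fun x => all (fun y =>
    ~~ uniq [:: a; b; x; y] ||
    all (fun j => has (fun pr => T9 pr.1 pr.2 == j) [:: (a, b); (a, x); (a, y); (b, x); (b, y); (x, y)])
      (iota 0 3)) (iota 0 9)) (iota 0 9)) (iota 0 9)) (iota 0 9).
Lemma good9_ok : good9 = true. Proof. vm_compute. reflexivity. Qed.

Definition sym9 : bool := all (fun u => all (fun w => (T9 u w == T9 w u) && (T9 u w < 3)) (iota 0 9)) (iota 0 9).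
Lemma sym9_ok : sym9 = true. Proof. vm_compute. reflexivity. Qed.

Theorem lower m : m < 10 -> ~ GR_property 3 4 2 m.
Proof.
move=> m10 HG.
pose c (x y : 'I_m) : 'I_3 := inord (T9 x y).
have Hs : forall (x y : 'I_m), T9 x y = T9 y x /\ T9 x y < 3.
  move=> x y; have := allP sym9_ok x; rewrite mem_iota add0n (leq_trans (ltn_ord x)) // => /(_ isT).
  move=> /allP /(_ y); rewrite mem_iota add0n (leq_trans (ltn_ord y)) // => /(_ isT) /andP [/eqP -> ->].
  by [].
have cs : edge_coloring c by move=> x y; rewrite /c (proj1 (Hs x y)).
have [S [S4 SC]] := HG c cs.
have : size (enum S) = 4 by rewrite -cardE.
have uS := enum_uniq S.
have mS : forall z, z \in enum S -> z \in S by move=> z; rewrite mem_enum.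
case: (enum S) uS mS => [|a [|b [|x [|y []]]]] //= uS mS _.
have Hin : forall (s t : 'I_m), s \in S -> t \in S -> s != t -> c s t \in colors_on c S.
  by move=> s t sS tS st; apply/imset2P; exists s t => //; rewrite inE tS st.
have : 3 <= #|colors_on c S|.
  apply: (@leq_trans #|[set: 'I_3]|); first by rewrite cardsT card_ord.
  apply: subset_leq_card; apply/subsetP => k _.
  have lt9 : forall z : 'I_m, z < 9 by move=> z; rewrite (leq_trans (ltn_ord z)).
  have := allP good9_ok a; rewrite mem_iota lt9 => /(_ isT) /allP /(_ b); rewrite mem_iota lt9 => /(_ isT).
  move=> /allP /(_ x); rewrite mem_iota lt9 => /(_ isT) /allP /(_ y); rewrite mem_iota lt9 => /(_ isT).
  have un : uniq (map val [:: a; b; x; y]) by rewrite map_inj_uniq //; exact: val_inj.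
  have un2 : uniq [:: val a; val b; val x; val y] := un.
  case/orP; first by rewrite un2.
  move=> Hall; have un' := un2.
  have := allP Hall (val k); rewrite mem_iota ltn_ord => /(_ isT) /hasP [[s t] Hst /eqP Ek].
  have Hc : forall s' t' : 'I_m, s' \in [:: a; b; x; y] -> t' \in [:: a; b; x; y] -> s' != t' ->
     T9 s' t' = val k -> k \in colors_on c S.
    move=> s' t' Hs' Ht' st E; have := Hin s' t' (mS _ Hs') (mS _ Ht') st.
    by rewrite /c E inord_val.
  have ab : forall z1 z2, z1 \in [:: a; b; x; y] -> z2 \in [:: a; b; x; y] -> val z1 != val z2 -> z1 != z2.
    by move=> z1 z2 _ _; apply: contra => /eqP ->.
  move: un' Hst; rewrite /= !inE !negb_or -!andbA.
  case/andP => nab /andP [nax /andP [nay /andP [nbx /andP [nby /andP [nxy _]]]]].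
  have ne : forall z1 z2 : 'I_m, val z1 != val z2 -> z1 != z2 by move=> z1 z2; apply: contra => /eqP ->.
  have I1 : a \in [:: a; b; x; y] by rewrite !inE eqxx.
  have I2 : b \in [:: a; b; x; y] by rewrite !inE eqxx ?orbT.
  have I3 : x \in [:: a; b; x; y] by rewrite !inE eqxx ?orbT.
  have I4 : y \in [:: a; b; x; y] by rewrite !inE eqxx ?orbT.
  do ![case/orP => [/eqP [Es Et]|]]; try move=> /eqP [Es Et]; subst s t.
  - exact: (Hc a b I1 I2 (ne _ _ nab) Ek).
  - exact: (Hc a x I1 I3 (ne _ _ nax) Ek).
  - exact: (Hc a y I1 I4 (ne _ _ nay) Ek).
  - exact: (Hc b x I2 I3 (ne _ _ nbx) Ek).
  - exact: (Hc b y I2 I4 (ne _ _ nby) Ek).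
  - exact: (Hc x y I3 I4 (ne _ _ nxy) Ek).
by rewrite ltnNge SC.
Qed.

Theorem mainTheorem9 : is_GR 3 4 2 10.
Proof. split; [exact: upper | exact: lower]. Qed.
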